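(* Let $x,p\in\mathbb{R}^d$ with $\lVert x\rVert=1$ and $p\neq 0$, and let $\delta\in\mathbb{R}$ with $\lVert p\rVert\ge\delta$. Put $\hat p=p/\lVert p\rVert$, and assume $p+x\neq 0$ and $\delta^2+2\delta\hat p^Tx+1>0$. Let $y=\frac{p+x}{\lVert p+x\rVert}$. Then $$\lVert\hat p-y\rVert\le\sqrt{2-2\,\frac{\delta+\hat p^Tx}{\sqrt{\delta^2+2\delta\hat p^Tx+1}}}.$$
   Context: $\lVert\cdot\rVert$ denotes the Euclidean norm on $\mathbb{R}^d$. *)

(* Defs.v *)
From mathcomp Require Import all_boot all_order all_algebra.
From mathcomp Require Import reals.
Set Implicit Arguments. Unset Strict Implicit. Unset Printing Implicit Defensive.
Import Order.TTheory GRing.Theory Num.Theory.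
Local Open Scope ring_scope.

Definition dotp (R : realType) (d : nat) (u v : 'rV[R]_d) : R :=
  \sum_(i < d) u 0 i * v 0 i.

Definition enorm (R : realType) (d : nat) (u : 'rV[R]_d) : R :=
  Num.sqrt (dotp u u).

(* Main.v *)
Require Import Defs.
From mathcomp Require Import all_boot all_order all_algebra.
From mathcomp Require Import reals.
From mathcomp Require Import ring lra.
Import Order.TTheory GRing.Theory Num.Theory.
Local Open Scope ring_scope.
Lemma key (R : realType) (a b k sa sb : R) : b <= a -> 0 <= k -> 0 < sa -> 0 < sb ->
  sa ^+ 2 = a ^+ 2 + k -> sb ^+ 2 = b ^+ 2 + k -> b * sa <= a * sb.
Proof.
move=> ba k0 sa0 sb0 ea eb.
have H : (b * sa - a * sb) * (b * sa + a * sb) = k * (b ^+ 2 - a ^+ 2).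
  by rewrite -[LHS]subr_sqr !exprMn ea eb; ring.
have [b0|b0] := lerP 0 b.
- have a0 : 0 <= a by lra.
  have [->|bn] := eqVneq b 0; first by rewrite mul0r; apply: mulr_ge0; lra.
  have bp : 0 < b by rewrite lt0r bn.
  have hp : 0 < b * sa + a * sb.
    have : 0 < b * sa by apply: mulr_gt0.
    have : 0 <= a * sb by apply: mulr_ge0; lra.
    lra.
  have h2 : b ^+ 2 <= a ^+ 2 by rewrite ler_sqr ?nnegrE; lra.
  have : (b * sa - a * sb) * (b * sa + a * sb) <= 0.
    by rewrite H; apply: mulr_ge0_le0; lra.
  rewrite pmulr_lle0 //; lra.
- have [a0|a0] := lerP 0 a.
    have : b * sa < 0 by rewrite pmulr_llt0.
    have : 0 <= a * sb by apply: mulr_ge0; lra.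
    lra.
  have hp : b * sa + a * sb < 0.
    have : b * sa < 0 by rewrite pmulr_llt0.
    have : a * sb < 0 by rewrite pmulr_llt0.
    lra.
  have h2 : a ^+ 2 <= b ^+ 2.
    rewrite -(sqrrN a) -(sqrrN b) ler_sqr ?nnegrE; lra.
  have : 0 <= (b * sa - a * sb) * (b * sa + a * sb).
    by rewrite H; apply: mulr_ge0; lra.
  rewrite nmulr_lge0 //; lra.
Qed.
Section Dot.
Context {R : realType} {d : nat}.
Implicit Types u v w : 'rV[R]_d.
Lemma dotpC u v : dotp u v = dotp v u.
Proof. by apply: eq_bigr => i _; rewrite mulrC. Qed.
Lemma dotpDl u v w : dotp (u + v) w = dotp u w + dotp v w.
Proof. by rewrite /dotp -big_split; apply: eq_bigr => i _; rewrite mxE mulrDl. Qed.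
Lemma dotpZl (a : R) u v : dotp (a *: u) v = a * dotp u v.
Proof. by rewrite /dotp mulr_sumr; apply: eq_bigr => i _; rewrite mxE mulrA. Qed.
Lemma dotpNl u v : dotp (- u) v = - dotp u v.
Proof. by rewrite -scaleN1r dotpZl mulN1r. Qed.
Lemma dotpDr u v w : dotp w (u + v) = dotp w u + dotp w v.
Proof. by rewrite dotpC dotpDl !(dotpC w). Qed.
Lemma dotpZr (a : R) u v : dotp v (a *: u) = a * dotp v u.
Proof. by rewrite dotpC dotpZl dotpC. Qed.
Lemma dotpNr u v : dotp v (- u) = - dotp v u.
Proof. by rewrite dotpC dotpNl dotpC. Qed.
Lemma dotp_ge0 u : 0 <= dotp u u.
Proof. by apply: sumr_ge0 => i _; rewrite -expr2 sqr_ge0. Qed.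
Lemma dotp_eq0 u : dotp u u = 0 -> u = 0.
Proof.
move=> h; apply/rowP => i; rewrite mxE.
have := psumr_eq0P (fun j _ => (sqr_ge0 (u 0 j) : 0 <= u 0 j * u 0 j)) h (i := i) isT.
by move/eqP; rewrite mulf_eq0 orbb => /eqP.
Qed.
Lemma enorm_sq u : enorm u ^+ 2 = dotp u u.
Proof. by rewrite /enorm sqr_sqrtr // dotp_ge0. Qed.
End Dot.
Theorem lemma4 (R : realType) (d : nat) (x p : 'rV[R]_d) (delta : R) :
  enorm x = 1 -> p != 0 -> delta <= enorm p ->
  let phat := (enorm p)^-1 *: p in
  p + x != 0 ->
  0 < delta ^+ 2 + 2 * delta * dotp phat x + 1 ->
  let y := (enorm (p + x))^-1 *: (p + x) in
  enorm (phat - y) <=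
    Num.sqrt (2 - 2 * ((delta + dotp phat x) /
                       Num.sqrt (delta ^+ 2 + 2 * delta * dotp phat x + 1))).
Proof.
move=> hx hp hd phat hpx hD; cbv zeta; set y := (enorm (p + x))^-1 *: (p + x).
have dxx : dotp x x = 1 by rewrite -enorm_sq hx expr1n.
set n := enorm p. have hd' : delta <= n by [].
have n0 : 0 < n.
  rewrite lt0r sqrtr_ge0 andbT; apply/negP => /eqP n0.
  have : dotp p p = 0 by rewrite -enorm_sq -/n n0 expr0n.
  by move/dotp_eq0/eqP; rewrite (negbTE hp).
have dpp : dotp p p = n ^+ 2 by rewrite enorm_sq.
have dhh : dotp phat phat = 1.
  by rewrite /phat dotpZl dotpZr dpp mulrA -expr2 -exprMn mulVf ?gt_eqF // expr1n.
have ep : p = n *: phat by rewrite /phat scalerA mulfV ?gt_eqF // scale1r.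
clearbody phat.
set c := dotp phat x in hD *.
have hc : c ^+ 2 <= 1.
  have := dotp_ge0 (phat - c *: x).
  move=> H; rewrite dotpDl !dotpDr !dotpNl !dotpNr !dotpZl !dotpZr dhh dxx -/c (dotpC x phat) -/c in H.
  lra.
set m := enorm (p + x).
have dN : dotp (p + x) (p + x) = n ^+ 2 + 2 * n * c + 1.
  rewrite ep dotpDl !dotpDr !dotpZl !dotpZr (dotpC x phat) dhh dxx -/c; ring.
have m0 : 0 < m.
  rewrite lt0r sqrtr_ge0 andbT; apply/negP => /eqP m0.
  have : dotp (p + x) (p + x) = 0 by rewrite -enorm_sq -/m m0 expr0n.
  by move/dotp_eq0/eqP; rewrite (negbTE hpx).
have mN : m ^+ 2 = n ^+ 2 + 2 * n * c + 1 by rewrite enorm_sq.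
have dhy : dotp phat y = (n + c) / m.
  rewrite /y -/m dotpZr ep dotpDr dotpZr dhh -/c; field; rewrite gt_eqF //.
have dyy : dotp y y = 1.
  rewrite /y -/m dotpZl dotpZr dN -mN; field; rewrite gt_eqF //.
have e : dotp (phat - y) (phat - y) = 2 - 2 * ((n + c) / m).
  rewrite dotpDl !dotpDr !dotpNl !dotpNr (dotpC y phat) dhh dyy dhy; ring.
rewrite /enorm e; apply: ler_wsqrtr.
have : (delta + c) / Num.sqrt (delta ^+ 2 + 2 * delta * c + 1) <= (n + c) / m.
  set s := Num.sqrt _.
  have s0 : 0 < s by rewrite sqrtr_gt0.
  have ss : s ^+ 2 = (delta + c) ^+ 2 + (1 - c ^+ 2).
    rewrite sqr_sqrtr; [ring | lra].
  have := @key _ (n + c) (delta + c) (1 - c ^+ 2) m s.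
  have hk : 0 <= 1 - c ^+ 2 by lra.
  move=> /(_ ltac:(lra) hk m0 s0 ltac:(rewrite mN; ring) ss) H.
  rewrite ler_pdivrMr // mulrAC ler_pdivlMr //.
lra.
Qed.
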